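(* Let $q\ge 7$ be an odd integer. Then the achromatic number of $K_6\square K_q$ is at least $2q+3$.
   Context: For a finite simple graph $G$ and a finite colour set $C$, a vertex colouring $f:V(G)\to C$ is complete if for any two distinct colours $c_1,c_2\in C$ there is an edge $v_1v_2\in E(G)$ with $f(v_i)=c_i$, $i=1,2$. The achromatic number of $G$ is the maximum number of colours in a proper complete vertex colouring of $G$. The Cartesian product $G_1\square G_2$ has vertex set $V(G_1)\times V(G_2)$, with $(u_1,u_2)$ adjacent to $(w_1,w_2)$ iff either $u_1w_1\in E(G_1)$ and $u_2=w_2$, or $u_2w_2\in E(G_2)$ and $u_1=w_1$. *)

(* Defs.v *)
From mathcomp Require Import all_boot.
Set Implicit Arguments. Unset Strict Implicit. Unset Printing Implicit Defensive.

Definition proper_col (V : finType) (e : rel V) (k : nat) (f : V -> 'I_k) : bool :=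
  [forall u, forall v, e u v ==> (f u != f v)].

Definition complete_col (V : finType) (e : rel V) (k : nat) (f : V -> 'I_k) : bool :=
  [forall c1 : 'I_k, forall c2 : 'I_k,
     (c1 != c2) ==> [exists u, exists v, [&& e u v, f u == c1 & f v == c2]]].

Definition has_achromatic_col (V : finType) (e : rel V) (k : nat) : bool :=
  [exists f : {ffun V -> 'I_k}, proper_col e f && complete_col e f].

(* Any such colouring with k >= 2 uses every colour, so k <= #|V|; the search
   range 0..#|V| is therefore exhaustive (k = 0 always works trivially when V is
   empty, k = 1 when V is nonempty). *)
Definition achromatic_number (V : finType) (e : rel V) : nat :=
  \max_(k < #|V|.+1 | has_achromatic_col e k) k.

Definition complete_rel (n : nat) : rel 'I_n := fun x y => x != y.

Definition cart_prod (V1 V2 : finType) (e1 : rel V1) (e2 : rel V2) : rel (V1 * V2) :=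
  fun x y => (e1 x.1 y.1 && (x.2 == y.2)) || (e2 x.2 y.2 && (x.1 == y.1)).

(* Main.v *)
Require Import Defs.
From mathcomp Require Import all_boot.
From mathcomp Require Import zify.

Set Implicit Arguments. Unset Strict Implicit. Unset Printing Implicit Defensive.

Definition spec (r j : nat) : nat :=
  match r, j with
  | 0, 0 => 0 | 0, 1 => 2 | 0, _ => 1
  | 1, 0 => 1 | 1, 1 => 0 | 1, _ => 2
  | 2, 0 => 3 | 2, 1 => 5 | 2, _ => 4
  | 3, 0 => 6 | 3, 1 => 8 | 3, _ => 7
  | 4, 0 => 7 | 4, 1 => 6 | 4, _ => 8
  | _, 0 => 4 | _, 1 => 3 | _, _ => 5
  end.

Definition tt (r s : nat) : nat :=
  match r, s with
  | 0, 0 => 0 | 0, _ => 1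
  | 1, 0 => 2 | 1, _ => 3
  | 2, 0 => 2 | 2, _ => 0
  | 3, 0 => 0 | 3, _ => 3
  | 4, 0 => 1 | 4, _ => 2
  | _, 0 => 3 | _, _ => 1
  end.

Definition dd (r s : nat) : nat :=
  match r, s with
  | 2, 0 => 1 | 3, _ => 1 | 5, 1 => 1 | _, _ => 0
  end.

Definition tau (a : nat) : nat := if a < 9 then a %/ 3 else 3 + (a - 9) %% 4.

Definition inT (t r : nat) : bool :=
  r \in nth [::] [:: [::0;1]; [::2;5]; [::3;4]; [::0;2;3]; [::0;4;5]; [::1;2;4]; [::1;3;5]] t.

Definition cnat (k r j : nat) : nat :=
  if j < 3 then spec r j
  else 9 + 4 * (((j - 3) %/ 2 + dd r ((j - 3) %% 2)) %% k) + tt r ((j - 3) %% 2).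

Lemma iotaP n (P : pred nat) : all P (iota 0 n) -> forall x, x < n -> P x.
Proof. by move/allP=> H x hx; apply: H; rewrite mem_iota. Qed.

Lemma spec_lt r j : spec r j < 9.
Proof. by case: r => [|[|[|[|[|r]]]]]; case: j => [|[|j]]. Qed.

Lemma tt_lt r s : tt r s < 4.
Proof. by case: r => [|[|[|[|[|r]]]]]; case: s => [|s]. Qed.

Lemma dd_lt r s : dd r s < 2.
Proof. by case: r => [|[|[|[|[|[|r]]]]]]; case: s => [|[|s]]. Qed.

Lemma spec_row r j j' : r < 6 -> j < 3 -> j' < 3 -> spec r j = spec r j' -> j = j'.
Proof.
move=> hr hj hj' /eqP.
have := @iotaP 6 (fun r => all (fun j => all (fun j' => (spec r j == spec r j') ==> (j == j')) (iota 0 3)) (iota 0 3)) erefl r hr.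
by move/iotaP/(_ j hj)/iotaP/(_ j' hj')/implyP => H /H /eqP.
Qed.

Lemma spec_col r r' j : r < 6 -> r' < 6 -> j < 3 -> spec r j = spec r' j -> r = r'.
Proof.
move=> hr hr' hj /eqP.
have := @iotaP 6 (fun r => all (fun r' => all (fun j => (spec r j == spec r' j) ==> (r == r')) (iota 0 3)) (iota 0 6)) erefl r hr.
by move/iotaP/(_ r' hr')/iotaP/(_ j hj)/implyP => H /H /eqP.
Qed.

Lemma tt_inj r s s' : r < 6 -> s < 2 -> s' < 2 -> tt r s = tt r s' -> s = s'.
Proof.
move=> hr hs hs' /eqP.
have := @iotaP 6 (fun r => all (fun s => all (fun s' => (tt r s == tt r s') ==> (s == s')) (iota 0 2)) (iota 0 2)) erefl r hr.
by move/iotaP/(_ s hs)/iotaP/(_ s' hs')/implyP => H /H /eqP.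
Qed.

Lemma dd_col r r' s : r < 6 -> r' < 6 -> s < 2 -> r != r' -> tt r s = tt r' s -> dd r s != dd r' s.
Proof.
move=> hr hr' hs hne /eqP.
have := @iotaP 6 (fun r => all (fun r' => all (fun s => (r != r') ==> (tt r s == tt r' s) ==> (dd r s != dd r' s)) (iota 0 2)) (iota 0 6)) erefl r hr.
by move/iotaP/(_ r' hr')/iotaP/(_ s hs)/implyP/(_ hne)/implyP.
Qed.

Lemma common t1 t2 : t1 < 7 -> t2 < 7 -> ~~ ((t1 < 3) && (t2 < 3)) ->
  exists2 r, r < 6 & inT t1 r && inT t2 r.
Proof.
move=> h1 h2 hn.
have := @iotaP 7 (fun t1 => all (fun t2 => (t1 < 3) && (t2 < 3) || has (fun r => inT t1 r && inT t2 r) (iota 0 6)) (iota 0 7)) erefl t1 h1.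
move/iotaP/(_ t2 h2)/orP => [hc|/hasP [r]]; first by rewrite hc in hn.
rewrite mem_iota => /andP [_ hr] H.
by exists r.
Qed.

Lemma cell_spec a r : a < 9 -> r < 6 -> inT (a %/ 3) r -> exists2 j, j < 3 & spec r j = a.
Proof.
move=> ha hr hin.
have := @iotaP 9 (fun a => all (fun r => inT (a %/ 3) r ==> has (fun j => spec r j == a) (iota 0 3)) (iota 0 6)) erefl a ha.
move/iotaP/(_ r hr)/implyP/(_ hin)/hasP => [j]; rewrite mem_iota => /andP [_ hj] /eqP H.
by exists j.
Qed.

Lemma cell_F t r : t < 4 -> r < 6 -> inT (3 + t) r -> exists2 s, s < 2 & tt r s = t.
Proof.
move=> ht hr hin.
have := @iotaP 4 (fun t => all (fun r => inT (3 + t) r ==> has (fun s => tt r s == t) (iota 0 2)) (iota 0 6)) erefl t ht.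
move/iotaP/(_ r hr)/implyP/(_ hin)/hasP => [s]; rewrite mem_iota => /andP [_ hs] /eqP H.
by exists s.
Qed.

Definition edgeb (r j r' j' : nat) : bool := (r != r') && (j == j') || (j != j') && (r == r').

Lemma spec_complete a b : a < 9 -> b < 9 -> a != b ->
  exists r, exists j, exists r', exists j',
    [/\ r < 6, j < 3, r' < 6 & j' < 3] /\ [/\ edgeb r j r' j', spec r j = a & spec r' j' = b].
Proof.
move=> ha hb hab.
have := @iotaP 9 (fun a => all (fun b => (a != b) ==>
   has (fun r => has (fun j => has (fun r' => has (fun j' =>
     [&& edgeb r j r' j', spec r j == a & spec r' j' == b]) (iota 0 3)) (iota 0 6)) (iota 0 3)) (iota 0 6)) (iota 0 9)) ltac:(vm_compute; reflexivity) a ha.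
move/iotaP/(_ b hb)/implyP/(_ hab)/hasP => [r]; rewrite mem_iota => /andP [_ hr].
move/hasP => [j]; rewrite mem_iota => /andP [_ hj].
move/hasP => [r']; rewrite mem_iota => /andP [_ hr'].
move/hasP => [j']; rewrite mem_iota => /andP [_ hj'] /and3P [he /eqP h1 /eqP h2].
by exists r, j, r', j'.
Qed.

Section Main.
Variable k : nat.
Hypothesis hk : 2 <= k.

Lemma mod_inj a b d : a < k -> b < k -> (a + d) %% k = (b + d) %% k -> a = b.
Proof. by move=> ha hb /eqP; rewrite eqn_modDr !modn_small // => /eqP. Qed.

Lemma mod_inj2 i d d' : d < 2 -> d' < 2 -> (i + d) %% k = (i + d') %% k -> d = d'.
Proof.
move=> hd hd' /eqP; rewrite eqn_modDl !modn_small // => [/eqP //||];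
  exact: leq_trans hk.
Qed.

Lemma cnat_lt r j : j < 2 * k + 3 -> cnat k r j < 4 * k + 9.
Proof.
move=> hj; rewrite /cnat; case: ifP => _.
  by have := spec_lt r j; lia.
have := tt_lt r ((j - 3) %% 2).
have : (((j - 3) %/ 2 + dd r ((j - 3) %% 2)) %% k) < k by rewrite ltn_pmod //; lia.
lia.
Qed.

Lemma rowP r j j' : r < 6 -> j < 2 * k + 3 -> j' < 2 * k + 3 -> j != j' -> cnat k r j != cnat k r j'.
Proof.
move=> hr hj hj' hne; apply/eqP; rewrite /cnat.
case: ifP => h1; case: ifP => h2.
- by move/(spec_row hr h1 h2); apply/eqP.
- have := spec_lt r j; lia.
- have := spec_lt r j'; lia.
set i := (j - 3) %/ 2; set s := (j - 3) %% 2.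
set i' := (j' - 3) %/ 2; set s' := (j' - 3) %% 2.
have hs : s < 2 by rewrite /s; lia.
have hs' : s' < 2 by rewrite /s'; lia.
have hi : i < k by rewrite /i; lia.
have hi' : i' < k by rewrite /i'; lia.
have := tt_lt r s; have := tt_lt r s' => t1 t2 H.
have [ex et] : ((i + dd r s) %% k) = ((i' + dd r s') %% k) /\ tt r s = tt r s' by lia.
have ess := tt_inj hr hs hs' et.
rewrite -ess in ex; have eii := mod_inj hi hi' ex.
move: hne; rewrite /i /s /i' /s' in eii ess; lia.
Qed.

Lemma colP r r' j : r < 6 -> r' < 6 -> j < 2 * k + 3 -> r != r' -> cnat k r j != cnat k r' j.
Proof.
move=> hr hr' hj hne; apply/eqP; rewrite /cnat.
case: ifP => h1.
  by move/(spec_col hr hr' h1); apply/eqP.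
set i := (j - 3) %/ 2; set s := (j - 3) %% 2.
have hs : s < 2 by rewrite /s; lia.
have := tt_lt r s; have := tt_lt r' s => t1 t2 H.
have [ex et] : ((i + dd r s) %% k) = ((i + dd r' s) %% k) /\ tt r s = tt r' s by lia.
have := dd_col hr hr' hs hne et.
by rewrite (mod_inj2 (dd_lt r s) (dd_lt r' s) ex) eqxx.
Qed.

Lemma cell a r : a < 4 * k + 9 -> r < 6 -> inT (tau a) r ->
  exists2 j, j < 2 * k + 3 & cnat k r j = a.
Proof.
move=> ha hr; rewrite /tau; case: ifP => h9 hin.
  have [j hj e] := cell_spec h9 hr hin.
  by exists j; [lia | rewrite /cnat hj].
set t := (a - 9) %% 4; set m := (a - 9) %/ 4.
have ht : t < 4 by rewrite /t; lia.
have hm : m < k by rewrite /m; lia.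
have [s hs est] := cell_F ht hr hin.
set d := dd r s.
have hd : d < 2 by exact: dd_lt.
set i := (m + (k - d)) %% k.
have hi : i < k by rewrite /i ltn_pmod //; lia.
exists (3 + (2 * i + s)); first lia.
rewrite /cnat; have -> : (3 + (2 * i + s) < 3) = false by lia.
have -> : (3 + (2 * i + s) - 3) %/ 2 = i by lia.
have -> : (3 + (2 * i + s) - 3) %% 2 = s by lia.
rewrite est -/d.
have -> : (i + d) %% k = m.
  rewrite /i modnDml -addnA subnK; last lia.
  by rewrite modnDr modn_small.
rewrite /t /m; lia.
Qed.

Lemma adj a b : a < 4 * k + 9 -> b < 4 * k + 9 -> a != b ->
  exists r, exists j, exists r', exists j',
    [/\ r < 6, j < 2 * k + 3, r' < 6 & j' < 2 * k + 3] /\ [/\ edgeb r j r' j', cnat k r j = a & cnat k r' j' = b].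
Proof.
move=> ha hb hab.
case: (boolP ((a < 9) && (b < 9))) => [/andP [a9 b9] | hn].
  have [r [j [r' [j' [[hr hj hr' hj'] [he e1 e2]]]]]] := spec_complete a9 b9 hab.
  exists r, j, r', j'; split; split => //; try lia.
    by rewrite /cnat hj.
  by rewrite /cnat hj'.
have ht1 : tau a < 7 by rewrite /tau; case: ifP => ?; lia.
have ht2 : tau b < 7 by rewrite /tau; case: ifP => ?; lia.
have hn' : ~~ ((tau a < 3) && (tau b < 3)).
  move: hn; rewrite /tau; case: ifP => ?; case: ifP => ? //=; lia.
have [r hr /andP [i1 i2]] := common ht1 ht2 hn'.
have [j hj e1] := cell ha hr i1.
have [j' hj' e2] := cell hb hr i2.
exists r, j, r, j'; split; split => //.
rewrite /edgeb eqxx andbT orbC; apply/orP; left.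
by apply: contraNneq hab => ejj; rewrite -e1 -e2 ejj.
Qed.

End Main.

Theorem proposition3 (q : nat) (hq : 7 <= q) (hodd : odd q) :
  2 * q + 3 <= achromatic_number (cart_prod (@complete_rel 6) (@complete_rel q)).
Proof.
have [k [hk eq]] : exists k, 2 <= k /\ q = 2 * k + 3.
  exists (q./2 - 1); have := odd_double_half q; rewrite hodd -muln2; lia.
set e := cart_prod _ _.
have hcol : has_achromatic_col e (2 * q + 3).
  have bnd : forall x : 'I_6 * 'I_q, cnat k x.1 x.2 < 2 * q + 3.
    move=> x; have h : (x.2 : nat) < 2 * k + 3 by rewrite -eq ltn_ord.
    by have := cnat_lt hk (x.1 : nat) h; lia.
  apply/existsP; exists [ffun x => Ordinal (bnd x)]; apply/andP; split.
    apply/forallP => u; apply/forallP => v; apply/implyP.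
    rewrite /e /cart_prod /complete_rel /= !ffunE.
    case: u v => [r j] [r' j'] /=.
    have hj : (j : nat) < 2 * k + 3 by rewrite -eq ltn_ord.
    have hj' : (j' : nat) < 2 * k + 3 by rewrite -eq ltn_ord.
    case/orP => /andP [hne /eqP ej].
      rewrite -(inj_eq val_inj) /= -ej; apply: (colP hk) => //; exact: ltn_ord.
    rewrite -(inj_eq val_inj) /= ej; apply: (rowP hk) => //; exact: ltn_ord.
  apply/forallP => c1; apply/forallP => c2; apply/implyP => hne.
  have h1 : (c1 : nat) < 4 * k + 9 by have := ltn_ord c1; lia.
  have h2 : (c2 : nat) < 4 * k + 9 by have := ltn_ord c2; lia.
  have [r [j [r' [j' [[hr hj hr' hj'] [he e1 e2]]]]]] := adj hk h1 h2 hne.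
  rewrite -eq in hj hj'.
  apply/existsP; exists (Ordinal hr, Ordinal hj); apply/existsP; exists (Ordinal hr', Ordinal hj').
  rewrite !ffunE -!(inj_eq val_inj) /= e1 e2 !eqxx !andbT.
  rewrite /e /cart_prod /complete_rel /= -!(inj_eq val_inj) /=.
  by move: he; rewrite /edgeb; case/orP => /andP [-> ->]; rewrite ?orbT.
have hV : 2 * q + 3 < #|(('I_6 * 'I_q)%type : finType)|.+1.
  by rewrite card_prod !card_ord; lia.
rewrite /achromatic_number.
exact: (leq_bigmax_cond (Ordinal hV) hcol).
Qed.
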